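(* Let $\mathbb{C}$ be a pointed category with finite products that has normal projections. Then $\mathbb{C}$ has a subtractive theory of abelian objects, i.e., the following hold: (A1) for any objects $X,X'$ equipped with subtractions $s\colon X\times X\to X$ and $s'\colon X'\times X'\to X'$, every morphism $g\colon X\to X'$ is homomorphic with respect to them, i.e., $g\circ s=s'\circ(g\times g)$; (A2) on any object $X$ there is at most one subtraction, and if $s$ is a subtraction on $X$ then $s$ is the subtraction $s(x,y)=x-y$ of an internal abelian group structure on $X$; (A3) if $X,X'$ are underlying objects of internal abelian groups in $\mathbb{C}$, then every morphism $X\to X'$ is a homomorphism of these internal abelian groups.
   Context: A pointed category $\mathbb{C}$ with finite products has normal projections if for all objects $X,Y$ the product projection $\pi_2\colon X\times Y\to Y$ is a cokernel of the morphism $(1_X,0)\colon X\to X\times Y$. Using generalised elements, a morphism $s\colon X\times X\to X$ is a subtraction on $X$ if $s\circ(1_X,1_X)=0$ and $s\circ(1_X,0)=1_X$ (i.e., $s(x,x)=0$ and $s(x,0)=x$). A morphism $g\colon X\to X'$ is homomorphic with respect to subtractions $s$ on $X$ and $s'$ on $X'$ if $g(s(x,y))=s'(g(x),g(y))$, i.e., $g\circ s=s'\circ(g\times g)$. An internal abelian group in $\mathbb{C}$ is an object with morphisms for addition, zero and negation satisfying the abelian group axioms internally. *)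

(* Defs.v *)
Set Implicit Arguments.
Unset Strict Implicit.

Record Cat := {
  Ob :> Type;
  Hom : Ob -> Ob -> Type;
  comp : forall {A B C : Ob}, Hom B C -> Hom A B -> Hom A C;
  idm : forall A : Ob, Hom A A;
  comp_assoc : forall (A B C D : Ob) (h : Hom C D) (g : Hom B C) (f : Hom A B),
      comp h (comp g f) = comp (comp h g) f;
  comp_id_l : forall (A B : Ob) (f : Hom A B), comp (idm B) f = f;
  comp_id_r : forall (A B : Ob) (f : Hom A B), comp f (idm A) = f
}.

Arguments Hom {c} _ _.
Arguments comp {c A B C} _ _.
Arguments idm {c} A.

(** The zero object [zo] is both initial and terminal, hence serves as the
    terminal object (empty product); binary products are given with their
    universal property. *)
Record PointedFP (C : Cat) := {
  zo : Ob C;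
  zin : forall X : Ob C, Hom zo X;
  zin_uniq : forall (X : Ob C) (f : Hom zo X), f = zin X;
  zout : forall X : Ob C, Hom X zo;
  zout_uniq : forall (X : Ob C) (f : Hom X zo), f = zout X;
  prod : Ob C -> Ob C -> Ob C;
  p1 : forall X Y : Ob C, Hom (prod X Y) X;
  p2 : forall X Y : Ob C, Hom (prod X Y) Y;
  pair : forall (T X Y : Ob C), Hom T X -> Hom T Y -> Hom T (prod X Y);
  pair_p1 : forall (T X Y : Ob C) (f : Hom T X) (g : Hom T Y),
      comp (p1 X Y) (pair f g) = f;
  pair_p2 : forall (T X Y : Ob C) (f : Hom T X) (g : Hom T Y),
      comp (p2 X Y) (pair f g) = g;
  pair_uniq : forall (T X Y : Ob C) (h : Hom T (prod X Y)),
      pair (comp (p1 X Y) h) (comp (p2 X Y) h) = h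
}.

Arguments zo {C} _.
Arguments zin {C} _ _.
Arguments zout {C} _ _.
Arguments prod {C} _ _ _.
Arguments p1 {C} _ _ _.
Arguments p2 {C} _ _ _.
Arguments pair {C} _ {T X Y} _ _.

Section Notions.
Context {C : Cat} (P : PointedFP C).

Definition zmor (X Y : Ob C) : Hom X Y := comp (zin P Y) (zout P X).

Definition prodmap {X Y X' Y' : Ob C} (f : Hom X X') (g : Hom Y Y')
  : Hom (prod P X Y) (prod P X' Y') :=
  pair P (comp f (p1 P X Y)) (comp g (p2 P X Y)).

Definition is_cokernel {K A Q : Ob C} (f : Hom K A) (q : Hom A Q) : Prop :=
  comp q f = zmor K Q /\
  forall (B : Ob C) (h : Hom A B), comp h f = zmor K B ->
    exists u : Hom Q B, comp u q = h /\
      forall u' : Hom Q B, comp u' q = h -> u' = u.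

Definition has_normal_projections : Prop :=
  forall X Y : Ob C,
    is_cokernel (pair P (idm X) (zmor X Y)) (p2 P X Y).

Definition is_subtraction {X : Ob C} (s : Hom (prod P X X) X) : Prop :=
  comp s (pair P (idm X) (idm X)) = zmor X X /\
  comp s (pair P (idm X) (zmor X X)) = idm X.

Definition homomorphic_sub {X X' : Ob C} (s : Hom (prod P X X) X)
  (s' : Hom (prod P X' X') X') (g : Hom X X') : Prop :=
  comp g s = comp s' (prodmap g g).

(** Internal abelian group on X: addition, zero (a point 1 -> X, the terminal
    object being the zero object), negation, with the abelian group axioms. *)
Record IAbGroup (X : Ob C) := {
  iadd : Hom (prod P X X) X;
  izero : Hom (zo P) X;
  ineg : Hom X X;
  iadd_assoc :
    let a := p1 P X (prod P X X) in
    let b := comp (p1 P X X) (p2 P X (prod P X X)) in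
    let c := comp (p2 P X X) (p2 P X (prod P X X)) in
    comp iadd (pair P (comp iadd (pair P a b)) c)
    = comp iadd (pair P a (comp iadd (pair P b c)));
  iadd_0r : comp iadd (pair P (idm X) (comp izero (zout P X))) = idm X;
  iadd_0l : comp iadd (pair P (comp izero (zout P X)) (idm X)) = idm X;
  iadd_negr : comp iadd (pair P (idm X) ineg) = comp izero (zout P X);
  iadd_negl : comp iadd (pair P ineg (idm X)) = comp izero (zout P X);
  iadd_comm : comp iadd (pair P (p2 P X X) (p1 P X X)) = iadd
}.

Definition isub {X : Ob C} (G : IAbGroup X) : Hom (prod P X X) X :=
  comp (iadd G) (pair P (p1 P X X) (comp (ineg G) (p2 P X X))).

Definition iab_hom {X X' : Ob C} (G : IAbGroup X) (G' : IAbGroup X')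
  (g : Hom X X') : Prop :=
  comp g (iadd G) = comp (iadd G') (prodmap g g).

Definition A1 : Prop :=
  forall (X X' : Ob C) (s : Hom (prod P X X) X) (s' : Hom (prod P X' X') X'),
    is_subtraction s -> is_subtraction s' ->
    forall g : Hom X X', homomorphic_sub s s' g.

Definition A2 : Prop :=
  forall X : Ob C,
    (forall s t : Hom (prod P X X) X, is_subtraction s -> is_subtraction t -> s = t) /\
    (forall s : Hom (prod P X X) X, is_subtraction s ->
       exists G : IAbGroup X, s = isub G).

Definition A3 : Prop :=
  forall (X X' : Ob C) (G : IAbGroup X) (G' : IAbGroup X') (g : Hom X X'),
    iab_hom G G' g.

Definition subtractive_theory_of_abelian_objects : Prop := A1 /\ A2 /\ A3.

End Notions.

(* Main.v *)
Require Import Defs.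
Set Implicit Arguments.
Unset Strict Implicit.

Lemma pair_comp (C : Cat) (P : PointedFP C) (S T X Y : Ob C)
  (f : Hom T X) (g : Hom T Y) (h : Hom S T) :
  comp (pair P f g) h = pair P (comp f h) (comp g h).
Proof.
  rewrite <- (pair_uniq (comp (pair P f g) h)).
  rewrite !comp_assoc, pair_p1, pair_p2. reflexivity.
Qed.

Lemma p1_pair_r (C : Cat) (P : PointedFP C) (S T X Y : Ob C)
  (f : Hom T X) (g : Hom T Y) (h : Hom S T) :
  comp (p1 P X Y) (comp (pair P f g) h) = comp f h.
Proof. rewrite comp_assoc, pair_p1; reflexivity. Qed.

Lemma p2_pair_r (C : Cat) (P : PointedFP C) (S T X Y : Ob C)
  (f : Hom T X) (g : Hom T Y) (h : Hom S T) :
  comp (p2 P X Y) (comp (pair P f g) h) = comp g h.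
Proof. rewrite comp_assoc, pair_p2; reflexivity. Qed.

Lemma zmor_l (C : Cat) (P : PointedFP C) (X Y Z : Ob C) (h : Hom X Y) :
  comp (zmor P Y Z) h = zmor P X Z.
Proof.
  unfold zmor. rewrite <- comp_assoc.
  rewrite (zout_uniq (comp (zout P Y) h)). reflexivity.
Qed.

Lemma zmor_r (C : Cat) (P : PointedFP C) (X Y Z : Ob C) (h : Hom Y Z) :
  comp h (zmor P X Y) = zmor P X Z.
Proof.
  unfold zmor. rewrite comp_assoc.
  rewrite (zin_uniq (comp h (zin P Y))). reflexivity.
Qed.

Lemma zinout (C : Cat) (P : PointedFP C) (X Y : Ob C) :
  comp (zin P Y) (zout P X) = zmor P X Y.
Proof. reflexivity. Qed.

Lemma pair_id (C : Cat) (P : PointedFP C) (X Y : Ob C) :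
  pair P (p1 P X Y) (p2 P X Y) = idm _.
Proof.
  rewrite <- (pair_uniq (idm (prod P X Y))). rewrite !comp_id_r. reflexivity.
Qed.

Ltac nrm :=
  repeat first
    [ rewrite <- comp_assoc
    | rewrite pair_comp
    | rewrite pair_p1
    | rewrite pair_p2
    | rewrite p1_pair_r
    | rewrite p2_pair_r
    | rewrite comp_id_l
    | rewrite comp_id_r
    | rewrite zmor_l
    | rewrite zmor_r
    | rewrite zinout
    | rewrite pair_id ].

Ltac nrm_in H :=
  repeat first
    [ rewrite <- comp_assoc in H
    | rewrite pair_comp in H
    | rewrite pair_p1 in H
    | rewrite pair_p2 in H
    | rewrite p1_pair_r in H
    | rewrite p2_pair_r in H
    | rewrite comp_id_l in H
    | rewrite comp_id_r in H
    | rewrite zmor_l in H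
    | rewrite zmor_r in H
    | rewrite zinout in H
    | rewrite pair_id in H ].

Lemma principle (C : Cat) (P : PointedFP C) (NP : has_normal_projections P)
  (X Y Z : Ob C) (h : Hom (prod P X Y) Z) :
  comp h (pair P (idm X) (zmor P X Y)) = zmor P X Z ->
  forall T (a : Hom T X) (b : Hom T Y),
    comp h (pair P a b) = comp h (pair P (zmor P T X) b).
Proof.
  intros Hh T a b.
  destruct (NP X Y) as [_ H]. destruct (H Z h Hh) as [u [Hu _]].
  rewrite <- Hu. nrm. reflexivity.
Qed.

Lemma sb_diag (C : Cat) (P : PointedFP C) (X T : Ob C) (s : Hom (prod P X X) X)
  (Hs : is_subtraction s) (a : Hom T X) :
  comp s (pair P a a) = zmor P T X.
Proof.
  destruct Hs as [H1 H2].
  replace (pair P a a) with (comp (pair P (idm X) (idm X)) a) by (nrm; reflexivity).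
  rewrite comp_assoc, H1. nrm. reflexivity.
Qed.

Lemma sb_zero (C : Cat) (P : PointedFP C) (X T : Ob C) (s : Hom (prod P X X) X)
  (Hs : is_subtraction s) (a : Hom T X) :
  comp s (pair P a (zmor P T X)) = a.
Proof.
  destruct Hs as [H1 H2].
  replace (pair P a (zmor P T X)) with (comp (pair P (idm X) (zmor P X X)) a)
    by (nrm; reflexivity).
  rewrite comp_assoc, H2. nrm. reflexivity.
Qed.

Lemma sb_I1 (C : Cat) (P : PointedFP C) (NP : has_normal_projections P)
  (X T : Ob C) (s : Hom (prod P X X) X)
  (Hs : is_subtraction s) (a b : Hom T X) :
  comp s (pair P a (comp s (pair P a b))) = b.
Proof.
  set (F := comp s (pair P (p1 P X X) (comp s (pair P (p1 P X X) (p2 P X X))))).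
  assert (HF : comp F (pair P (idm X) (zmor P X X)) = zmor P X X).
  { unfold F. nrm. rewrite (sb_zero Hs). rewrite (sb_diag Hs). reflexivity. }
  pose proof (principle NP HF a b) as E1.
  pose proof (principle NP HF b b) as E2.
  rewrite <- E2 in E1.
  unfold F in E1. nrm_in E1. nrm. rewrite E1.
  rewrite (sb_diag Hs). rewrite (sb_zero Hs). reflexivity.
Qed.

Lemma sb_cancel (C : Cat) (P : PointedFP C) (NP : has_normal_projections P)
  (X T : Ob C) (s : Hom (prod P X X) X)
  (Hs : is_subtraction s) (a b : Hom T X) :
  comp s (pair P a b) = zmor P T X -> a = b.
Proof.
  intro H. rewrite <- (sb_I1 NP Hs a b). rewrite H. rewrite (sb_zero Hs). reflexivity.
Qed.

Lemma sep2 (C : Cat) (P : PointedFP C) (NP : has_normal_projections P)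
  (X Y Z : Ob C) (t : Hom (prod P Z Z) Z) (Ht : is_subtraction t)
  (F G : Hom (prod P X Y) Z) :
  comp F (pair P (idm X) (zmor P X Y)) = comp G (pair P (idm X) (zmor P X Y)) ->
  comp F (pair P (zmor P Y X) (idm Y)) = comp G (pair P (zmor P Y X) (idm Y)) ->
  F = G.
Proof.
  intros H1 H2.
  apply (sb_cancel NP Ht).
  set (d := comp t (pair P F G)).
  assert (Hd : comp d (pair P (idm X) (zmor P X Y)) = zmor P X Z).
  { unfold d. nrm. rewrite H1. apply (sb_diag Ht). }
  pose proof (principle NP Hd (p1 P X Y) (p2 P X Y)) as E.
  rewrite pair_id, comp_id_r in E. rewrite E.
  unfold d. nrm.
  replace (pair P (zmor P (prod P X Y) X) (p2 P X Y))
    with (comp (pair P (zmor P Y X) (idm Y)) (p2 P X Y)) by (nrm; reflexivity).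
  rewrite !comp_assoc, H2. apply (sb_diag Ht).
Qed.

Lemma sepd (C : Cat) (P : PointedFP C) (NP : has_normal_projections P)
  (X Z : Ob C) (t : Hom (prod P Z Z) Z) (Ht : is_subtraction t)
  (F G : Hom (prod P X X) Z) :
  comp F (pair P (idm X) (zmor P X X)) = comp G (pair P (idm X) (zmor P X X)) ->
  comp F (pair P (idm X) (idm X)) = comp G (pair P (idm X) (idm X)) ->
  F = G.
Proof.
  intros H1 H2.
  apply (sb_cancel NP Ht).
  set (d := comp t (pair P F G)).
  assert (Hd : comp d (pair P (idm X) (zmor P X X)) = zmor P X Z).
  { unfold d. nrm. rewrite H1. apply (sb_diag Ht). }
  pose proof (principle NP Hd (p1 P X X) (p2 P X X)) as E.
  pose proof (principle NP Hd (p2 P X X) (p2 P X X)) as E'.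
  rewrite pair_id, comp_id_r in E. rewrite E, <- E'.
  unfold d. nrm.
  replace (pair P (p2 P X X) (p2 P X X))
    with (comp (pair P (idm X) (idm X)) (p2 P X X)) by (nrm; reflexivity).
  rewrite !comp_assoc, H2. apply (sb_diag Ht).
Qed.


Lemma prodmap_pair (C : Cat) (P : PointedFP C) (T X Y X' Y' : Ob C)
  (f : Hom X X') (g : Hom Y Y') (a : Hom T X) (b : Hom T Y) :
  comp (prodmap P f g) (pair P a b) = pair P (comp f a) (comp g b).
Proof. unfold prodmap. nrm. reflexivity. Qed.

Lemma isub_sub (C : Cat) (P : PointedFP C) (X : Ob C) (G : IAbGroup P X) :
  is_subtraction (isub G).
Proof.
  pose proof (iadd_0r G) as H0. pose proof (iadd_negr G) as Hn.
  rewrite (zin_uniq (izero G)), zinout in H0, Hn.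
  unfold isub; split; nrm.
  - exact Hn.
  - exact H0.
Qed.


Lemma iadd_0r_el (C : Cat) (P : PointedFP C) (X T : Ob C) (G : IAbGroup P X) (a : Hom T X) :
  comp (iadd G) (pair P a (zmor P T X)) = a.
Proof.
  pose proof (iadd_0r G) as H0. rewrite (zin_uniq (izero G)), zinout in H0.
  replace (pair P a (zmor P T X)) with (comp (pair P (idm X) (zmor P X X)) a)
    by (nrm; reflexivity).
  rewrite comp_assoc, H0. nrm. reflexivity.
Qed.

Lemma iadd_0l_el (C : Cat) (P : PointedFP C) (X T : Ob C) (G : IAbGroup P X) (a : Hom T X) :
  comp (iadd G) (pair P (zmor P T X) a) = a.
Proof.
  pose proof (iadd_0l G) as H0. rewrite (zin_uniq (izero G)), zinout in H0.
  replace (pair P (zmor P T X) a) with (comp (pair P (zmor P X X) (idm X)) a)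
    by (nrm; reflexivity).
  rewrite comp_assoc, H0. nrm. reflexivity.
Qed.

Lemma addE (C : Cat) (P : PointedFP C) (X T : Ob C) (s : Hom (prod P X X) X)
  (a b : Hom T X) :
  comp (comp s (pair P (p1 P X X) (comp (comp s (pair P (zmor P X X) (idm X))) (p2 P X X))))
    (pair P a b) = comp s (pair P a (comp s (pair P (zmor P T X) b))).
Proof. nrm. reflexivity. Qed.

Ltac ssimp NP Hs :=
  repeat first [ rewrite addE | progress nrm | rewrite (sb_diag Hs)
               | rewrite (sb_zero Hs) | rewrite (sb_I1 NP Hs) ].

Theorem theorem2p1 (C : Cat) (P : PointedFP C) :
  has_normal_projections P -> subtractive_theory_of_abelian_objects P.
Proof.
  intro NP.
  assert (HA1 : A1 P).
  { intros X X' s s' Hs Hs' g. unfold homomorphic_sub.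
    apply (sepd NP Hs').
    - rewrite <- !comp_assoc, prodmap_pair. destruct Hs as [_ H2]. rewrite H2.
      nrm. rewrite (sb_zero Hs'). reflexivity.
    - rewrite <- !comp_assoc, prodmap_pair. destruct Hs as [H1 _]. rewrite H1.
      nrm. rewrite (sb_diag Hs'). reflexivity. }
  split; [exact HA1 | split].
  - intro X. split.
    + intros s t Hs Ht. apply (sepd NP Ht).
      * destruct Hs as [_ H2]; destruct Ht as [_ H2']. rewrite H2, H2'. reflexivity.
      * destruct Hs as [H1 _]; destruct Ht as [H1' _]. rewrite H1, H1'. reflexivity.
    + intros s Hs.
      unshelve refine (ex_intro _ (@Build_IAbGroup C P X
        (comp s (pair P (p1 P X X) (comp (comp s (pair P (zmor P X X) (idm X))) (p2 P X X))))
        (zin P X) (comp s (pair P (zmor P X X) (idm X))) _ _ _ _ _ _) _).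
      * cbv zeta. apply (sep2 NP Hs); ssimp NP Hs; reflexivity.
      * ssimp NP Hs; reflexivity.
      * ssimp NP Hs; reflexivity.
      * ssimp NP Hs; reflexivity.
      * ssimp NP Hs; reflexivity.
      * apply (sep2 NP Hs); ssimp NP Hs; reflexivity.
      * unfold isub; cbn. ssimp NP Hs. reflexivity.
  - intros X X' G G' g. unfold iab_hom.
    pose proof (isub_sub G') as Ht.
    apply (sep2 NP Ht).
    + rewrite <- !comp_assoc, prodmap_pair, iadd_0r_el. nrm.
      rewrite iadd_0r_el. reflexivity.
    + rewrite <- !comp_assoc, prodmap_pair, iadd_0l_el. nrm.
      rewrite iadd_0l_el. reflexivity.
Qed.
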